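(* In the setting of the generalized Hubbard Hamiltonian $H_{\mathrm{gen}}$ on a finite graph $G=(V,E)$, assume there is no spin-orbit coupling, i.e. $t^{\uparrow,\downarrow}_{\boldsymbol r,\boldsymbol r'}=t^{\downarrow,\uparrow}_{\boldsymbol r,\boldsymbol r'}=0$ for all edges, and that $t^{\uparrow,\uparrow}_{\boldsymbol r,\boldsymbol r'}\neq0\neq t^{\downarrow,\downarrow}_{\boldsymbol r,\boldsymbol r'}$ for every edge, and let $G$ be connected. Then nonzero numbers $q_{\boldsymbol r}$ satisfy the edge condition $q_{\boldsymbol r}t^{\sigma',\sigma}_{\boldsymbol r',\boldsymbol r}s_\sigma+q_{\boldsymbol r'}t^{\bar\sigma,\bar\sigma'}_{\boldsymbol r,\boldsymbol r'}s_{\sigma'}=0$ for all edges and all $\sigma,\sigma'$ if and only if, for every edge, $q_{\boldsymbol r}/q_{\boldsymbol r'}=-t^{\downarrow,\downarrow}_{\boldsymbol r,\boldsymbol r'}/\overline{t^{\uparrow,\uparrow}_{\boldsymbol r,\boldsymbol r'}}=-t^{\uparrow,\uparrow}_{\boldsymbol r,\boldsymbol r'}/\overline{t^{\downarrow,\downarrow}_{\boldsymbol r,\boldsymbol r'}}$. In that case $|t^{\uparrow,\uparrow}_{\boldsymbol r,\boldsymbol r'}|=|t^{\downarrow,\downarrow}_{\boldsymbol r,\boldsymbol r'}|$ and $|q_{\boldsymbol r}|$ is independent of $\boldsymbol r$; normalizing $q_{\boldsymbol r}=e^{i\phi_{\boldsymbol r}}$ and writing $t^{\uparrow,\uparrow}_{\boldsymbol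 r,\boldsymbol r'}=t_{\boldsymbol r,\boldsymbol r'}e^{i\theta^{\uparrow\uparrow}_{\boldsymbol r,\boldsymbol r'}}$, $t^{\downarrow,\downarrow}_{\boldsymbol r,\boldsymbol r'}=t_{\boldsymbol r,\boldsymbol r'}e^{i\theta^{\downarrow\downarrow}_{\boldsymbol r,\boldsymbol r'}}$ with $t_{\boldsymbol r,\boldsymbol r'}>0$, the condition is equivalent to $\theta^{\uparrow\uparrow}_{\boldsymbol r,\boldsymbol r'}+\theta^{\downarrow\downarrow}_{\boldsymbol r,\boldsymbol r'}+\pi\equiv\phi_{\boldsymbol r}-\phi_{\boldsymbol r'}\pmod{2\pi}$ for every edge. Consequently, if in addition $U_{\boldsymbol r}-\mu_{\boldsymbol r,\uparrow}-\mu_{\boldsymbol r,\downarrow}=\mathcal{E}$ for all $\boldsymbol r$, then $[H_{\mathrm{gen}},\eta^\dagger]=\mathcal{E}\eta^\dagger$ with $\eta^\dagger=\sum_{\boldsymbol r}e^{i\phi_{\boldsymbol r}}c^\dagger_{\boldsymbol r,\uparrow}c^\dagger_{\boldsymbol r,\downarrow}$.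
   Context: Generalized Hubbard Hamiltonian on a finite simple graph $G=(V,E)$ (each edge with a fixed orientation $(\boldsymbol r,\boldsymbol r')$): $H_{\mathrm{gen}}=-\sum_{\sigma,\sigma'}\sum_{\{\boldsymbol r,\boldsymbol r'\}\in E}(t^{\sigma,\sigma'}_{\boldsymbol r,\boldsymbol r'}c^\dagger_{\boldsymbol r,\sigma}c_{\boldsymbol r',\sigma'}+t^{\sigma',\sigma}_{\boldsymbol r',\boldsymbol r}c^\dagger_{\boldsymbol r',\sigma'}c_{\boldsymbol r,\sigma})-\sum_{\boldsymbol r,\sigma}\mu_{\boldsymbol r,\sigma}\hat n_{\boldsymbol r,\sigma}+\sum_{\boldsymbol r}U_{\boldsymbol r}\hat n_{\boldsymbol r,\uparrow}\hat n_{\boldsymbol r,\downarrow}$ with $t^{\sigma,\sigma'}_{\boldsymbol r,\boldsymbol r'}=\overline{t^{\sigma',\sigma}_{\boldsymbol r',\boldsymbol r}}$ and real $\mu_{\boldsymbol r,\sigma},U_{\boldsymbol r}$; $c,c^\dagger$ are spin-1/2 fermion operators, $\hat n_{\boldsymbol r,\sigma}=c^\dagger_{\boldsymbol r,\sigma}c_{\boldsymbol r,\sigma}$; $s_\uparrow=1,s_\downarrow=-1$, $\bar\uparrow=\downarrow,\bar\downarrow=\uparrow$. *)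

(* Defs.v *)
From HB Require Import structures.
From mathcomp Require Import all_boot all_order all_algebra.
From mathcomp Require Import complex.
From mathcomp Require Import reals trigo.

Set Implicit Arguments.
Unset Strict Implicit.
Unset Printing Implicit Defensive.

Import Order.TTheory GRing.Theory Num.Theory.
Local Open Scope ring_scope.
Local Open Scope complex_scope.

Inductive spin := Up | Dn.

Definition spin_to_bool (s : spin) : bool := if s is Up then true else false.
Definition bool_to_spin (b : bool) : spin := if b then Up else Dn.
Lemma spin_to_boolK : cancel spin_to_bool bool_to_spin.
Proof. by case. Qed.
HB.instance Definition _ := Finite.copy spin (can_type spin_to_boolK).

Definition sgn_spin {T : pzRingType} (s : spin) : T :=
  if s is Up then 1 else -1.
Definition flip (s : spin) : spin := if s is Up then Dn else Up.

Definition expi {R : realType} (x : R) : R[i] := (cos x +i* sin x)%C.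

Section Fock.
Variables (R : realType) (V : finType).

Definition mode := (V * spin)%type.

(* occupation-number basis states are the subsets of modes; operators are
   square matrices indexed (through enum_val) by these subsets. *)
Definition op := 'M[R[i]]_(#|{set mode}|).

Definition mk_op (f : {set mode} -> {set mode} -> R[i]) : op :=
  \matrix_(i, j) f (enum_val i) (enum_val j).

(* Jordan–Wigner sign: (-1)^(number of occupied modes of T before m),
   w.r.t. the fixed enumeration order of the modes. *)
Definition jw_sign (m : mode) (T : {set mode}) : R[i] :=
  (-1) ^+ #|[set m' in T | (enum_rank m' < enum_rank m)%N]|.

Definition cdag (m : mode) : op :=
  mk_op (fun S T => if (m \notin T) && (S == m |: T) then jw_sign m T else 0).

Definition cann (m : mode) : op :=
  mk_op (fun S T => if (m \in T) && (S == T :\ m) then jw_sign m T else 0).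

Definition numop (m : mode) : op := cdag m *m cann m.

Definition commutator (A B : op) : op := A *m B - B *m A.

(* Generalized Hubbard Hamiltonian.  The sum over (unoriented) edges of
   t_{r,r'} c^dag_r c_r' + t_{r',r} c^dag_r' c_r is written as the sum over
   ordered adjacent pairs (r, r'). *)
Definition H_gen (adj : rel V) (t : V -> V -> spin -> spin -> R[i])
    (mu : V -> spin -> R) (U : V -> R) : op :=
  - (\sum_(r : V) \sum_(r' : V | adj r r') \sum_(s : spin) \sum_(s' : spin)
        t r r' s s' *: (cdag (r, s) *m cann (r', s')))
  - (\sum_(r : V) \sum_(s : spin) (mu r s)%:C *: numop (r, s))
  + \sum_(r : V) (U r)%:C *: (numop (r, Up) *m numop (r, Dn)).

Definition eta_dag (q : V -> R[i]) : op :=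
  \sum_(r : V) q r *: (cdag (r, Up) *m cdag (r, Dn)).

Definition simple_graph (adj : rel V) : Prop :=
  (forall x y, adj x y = adj y x) /\ (forall x, ~~ adj x x).

Definition hermitian_hopping (adj : rel V) (t : V -> V -> spin -> spin -> R[i]) : Prop :=
  forall r r' s s', adj r r' -> t r r' s s' = (t r' r s' s)^*.

Definition edge_condition (adj : rel V) (t : V -> V -> spin -> spin -> R[i])
    (q : V -> R[i]) : Prop :=
  forall r r', adj r r' -> forall s s' : spin,
    q r * t r' r s' s * sgn_spin s + q r' * t r r' (flip s) (flip s') * sgn_spin s' = 0.

End Fock.

(* Main.v *)
Require Import Defs.
From HB Require Import structures.
From mathcomp Require Import all_boot all_order all_algebra.
From mathcomp Require Import complex.
From mathcomp Require Import reals trigo.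
From mathcomp Require Import ring lra.
Import Order.TTheory GRing.Theory Num.Theory.
Local Open Scope ring_scope.
Local Open Scope complex_scope.
Section Trig.
Variable R : realType.
Implicit Types a b x y : R.

Lemma expiD a b : expi (a + b) = expi a * expi b.
Proof. rewrite /expi cosD sinD; simpc. congr (_ +i* _); ring. Qed.

Lemma expi0 : expi (0 : R) = 1.
Proof. by rewrite /expi cos0 sin0. Qed.

Lemma expipi : expi (pi : R) = -1.
Proof. rewrite /expi cospi sinpi; simpc. by []. Qed.

Lemma expiNr a : expi a * expi (- a) = 1.
Proof. by rewrite -expiD subrr expi0. Qed.

Lemma expi_neq0 a : expi a != 0.
Proof. apply/eqP=> E; have := expiNr a; rewrite E mul0r => /eqP; by rewrite eq_sym oner_eq0. Qed.

Lemma expiV a : (expi a)^-1 = expi (- a).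
Proof.
have H := expiNr a.
by rewrite -[expi (-a)]mul1r -(mulVf (expi_neq0 a)) -mulrA H mulr1.
Qed.

Lemma conj_texp (c th : R) : (c%:C * expi th)^* = c%:C * expi (- th).
Proof. rewrite /expi cosN sinN; simpc. by []. Qed.

Lemma conj_texp2 (c th : R) : Num.conj (c%:C * expi th) = c%:C * expi (- th).
Proof. exact: conj_texp. Qed.

Lemma expiJ a : (expi a)^* = expi (- a).
Proof. by rewrite /expi cosN sinN. Qed.

Lemma cos_per b (k : int) : cos (b + k%:~R * (2 * pi)) = cos b.
Proof.
have E : forall n : nat, (n%:R : R) * (2 * pi) = (pi *+ 2) *+ n.
  by move=> n; rewrite !mulr_natl.
case: k => n.
  by rewrite -pmulrn E (periodicn (@cosD2pi R)).
rewrite NegzE mulrNz mulNr E.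
by rewrite -[in RHS](subrK ((pi *+ 2) *+ n.+1) b) (periodicn (@cosD2pi R)).
Qed.

Lemma sin_per b (k : int) : sin (b + k%:~R * (2 * pi)) = sin b.
Proof.
have E : forall n : nat, (n%:R : R) * (2 * pi) = (pi *+ 2) *+ n.
  by move=> n; rewrite !mulr_natl.
case: k => n.
  by rewrite -pmulrn E (periodicn (@sinD2pi R)).
rewrite NegzE mulrNz mulNr E.
by rewrite -[in RHS](subrK ((pi *+ 2) *+ n.+1) b) (periodicn (@sinD2pi R)).
Qed.

Lemma cos1_int x : cos x = 1 -> sin x = 0 -> exists k : int, x = k%:~R * (2 * pi).
Proof.
move=> Hc Hs.
have pi0 := @pi_gt0 R.
have p2 : 0 < 2 * pi :> R by lra.
set k := Num.floor (x / (2 * pi)).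
exists k.
set y := x - k%:~R * (2 * pi).
have xy : x = y + k%:~R * (2 * pi) by rewrite /y subrK.
have h1 : k%:~R * (2 * pi) <= x by rewrite -ler_pdivlMr // floor_le.
have h2 : x < (k + 1)%:~R * (2 * pi) by rewrite -ltr_pdivrMr // floorD1_gt.
rewrite intrD mulrDl mul1r in h2.
have y0 : 0 <= y by rewrite /y subr_ge0.
have y2 : y < 2 * pi by rewrite /y; lra.
have cy : cos y = 1 by rewrite -Hc xy cos_per.
have sy : sin y = 0 by rewrite -Hs xy sin_per.
suff : y = 0 by rewrite /y => /eqP; rewrite subr_eq0 => /eqP.
case: (ltgtP y 0) => [|yp|//]; first by lra.
case: (ltgtP y pi) => [ypi|ypi|ypi].
- have := @sin_gt0_pi R y; rewrite yp ypi sy ltxx => /(_ isT) //.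
- have := @sin_gt0_pi R (y - pi).
  have -> : 0 < y - pi < pi by apply/andP; split; lra.
  move=> /(_ isT); have := sinDpi (y - pi); rewrite subrK sy => H.
  have : sin (y - pi) = 0 by rewrite -oppr0 H opprK.
  by move=> ->; rewrite ltxx.
- by move: cy; rewrite ypi cospi => H; lra.
Qed.

Lemma expi_eqP a b : expi a = expi b <-> exists k : int, a = b + k%:~R * (2 * pi).
Proof.
split; last first.
  by case=> k ->; rewrite /expi cos_per sin_per.
case=> Hc Hs.
have c1 : cos (a - b) = 1 by rewrite cosB Hc Hs -!expr2 cos2Dsin2.
have s0 : sin (a - b) = 0 by rewrite sinB Hc Hs mulrC subrr.
have [k Hk] := @cos1_int (a - b) c1 s0.
by exists k; rewrite -Hk addrC subrK.
Qed.

End Trig.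

Section Parts.
Variables (R : realType) (V : finType) (adj : rel V)
  (t : V -> V -> spin -> spin -> R[i]).
Hypotheses (Hsg : simple_graph adj) (Hh : hermitian_hopping adj t)
  (Hsoc : forall r r', adj r r' -> t r r' Up Dn = 0 /\ t r r' Dn Up = 0)
  (Hnz : forall r r', adj r r' -> t r r' Up Up != 0 /\ t r r' Dn Dn != 0).

Lemma adj_sym r r' : adj r r' -> adj r' r.
Proof. by case: Hsg => S _; rewrite S. Qed.

Lemma tconj r r' s s' : adj r r' -> t r' r s' s = (t r r' s s')^*.
Proof. by move=> a; apply: Hh; apply: adj_sym. Qed.

Lemma solve_lin (x y c d : R[i]) : c != 0 -> y != 0 -> x * c + y * d = 0 -> x / y = - d / c.
Proof.
move=> cz yz /eqP; rewrite addr_eq0 => /eqP E.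
by rewrite -(mulfK cz x) E; field; rewrite cz yz.
Qed.

Lemma solve_lin' (x y c d : R[i]) : c != 0 -> y != 0 -> x / y = - d / c -> x * c + y * d = 0.
Proof. by move=> cz yz E; rewrite -(divfK yz x) E; field. Qed.

Lemma part1 (q : V -> R[i]) : (forall r, q r != 0) ->
     (edge_condition adj t q <->
      (forall r r', adj r r' ->
         q r / q r' = - t r r' Dn Dn / (t r r' Up Up)^* /\
         q r / q r' = - t r r' Up Up / (t r r' Dn Dn)^*)).
Proof.
move=> qnz; split.
  move=> E r r' a; have [uz dz] := Hnz _ _ a.
  have e1 := E r r' a Up Up; have e2 := E r r' a Dn Dn.
  rewrite /= !(tconj _ _ _ _ a) !mulr1 in e1; rewrite /= !(tconj _ _ _ _ a) !mulrN1 -opprD in e2.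
  move/eqP: e2; rewrite oppr_eq0 => /eqP e2.
  by split; apply: solve_lin => //; rewrite conjc_eq0.
move=> H r r' a s s'; have [h1 h2] := H r r' a; have [uz dz] := Hnz _ _ a.
have [s1 s2] := Hsoc _ _ a; have [s3 s4] := Hsoc _ _ (adj_sym _ _ a).
case: s; case: s' => /=.
- by rewrite (tconj _ _ _ _ a) !mulr1; apply: solve_lin' => //; rewrite conjc_eq0.
- by rewrite s2 s4 !mulr0 !mul0r addr0.
- by rewrite s1 s3 !mulr0 !mul0r addr0.
- rewrite (tconj _ _ _ _ a) !mulrN1 -opprD; apply/eqP; rewrite oppr_eq0; apply/eqP.
  by apply: solve_lin' => //; rewrite conjc_eq0.
Qed.

Lemma part2 (q : V -> R[i]) : (forall x y : V, connect adj x y) ->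
   (forall r, q r != 0) -> edge_condition adj t q ->
     (forall r r', adj r r' -> `|t r r' Up Up| = `|t r r' Dn Dn|) /\
     (forall r r', `|q r| = `|q r'|).
Proof.
move=> Hc qnz E; have P := (@part1 q qnz).1 E.
have nuv : forall r r', adj r r' -> `|t r r' Up Up| = `|t r r' Dn Dn|.
  move=> r r' a; have [h1 h2] := P r r' a; have [uz dz] := Hnz _ _ a.
  have e : t r r' Dn Dn * (t r r' Dn Dn)^* = t r r' Up Up * (t r r' Up Up)^*.
    move: h2; rewrite h1 => /eqP; rewrite eqr_div ?conjc_eq0 // !mulNr => /eqP /oppr_inj.
    done.
  apply/eqP; rewrite -(@eqrXn2 _ 2) //; apply/eqP.
  by rewrite !sqr_normc e.
have qadj : forall r r', adj r r' -> `|q r| = `|q r'|.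
  move=> r r' a; have [h1 _] := P r r' a; have [uz dz] := Hnz _ _ a.
  have := congr1 Num.norm h1.
  rewrite !normf_div normrN normcJ -(nuv _ _ a) divff ?normr_eq0 //.
  have nz : `|q r'| != 0 by rewrite normr_eq0.
  by move=> E1; rewrite -(divfK nz `|q r|) E1 mul1r.
split => // x y; have /connectP [p pth ->] := Hc x y.
elim: p x pth => [|z p IH] x //= /andP [axz pz].
by rewrite (qadj _ _ axz) IH.
Qed.

Lemma part3 (phi : V -> R) (tt th_uu th_dd : V -> V -> R) :
     (forall r r', adj r r' ->
        [/\ 0 < tt r r',
            t r r' Up Up = (tt r r')%:C * expi (th_uu r r') &
            t r r' Dn Dn = (tt r r')%:C * expi (th_dd r r')]) ->
     (edge_condition adj t (fun r => expi (phi r)) <->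
      (forall r r', adj r r' ->
         exists k : int,
           th_uu r r' + th_dd r r' + pi = phi r - phi r' + k%:~R * (2 * pi))).
Proof.
move=> Ht; rewrite (@part1 _ (fun r => @expi_neq0 R (phi r))).
have key : forall r r', adj r r' ->
   [/\ expi (phi r) / expi (phi r') = expi (phi r - phi r'),
       - t r r' Dn Dn / (t r r' Up Up)^* = expi (th_uu r r' + th_dd r r' + pi) &
       - t r r' Up Up / (t r r' Dn Dn)^* = expi (th_uu r r' + th_dd r r' + pi)].
  move=> r r' a; have [tp -> ->] := Ht r r' a.
  have tz : (tt r r')%:C != 0 :> R[i].
    by apply/eqP => -[] /eqP; rewrite gt_eqF.
  have Eu : expi (th_uu r r') = (expi (- th_uu r r'))^-1 by rewrite expiV opprK.
  have Ed : expi (th_dd r r') = (expi (- th_dd r r'))^-1 by rewrite expiV opprK.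
  have nu := @expi_neq0 R (- th_uu r r'); have nd := @expi_neq0 R (- th_dd r r').
  rewrite !conj_texp2 (@expiD R (th_uu r r' + th_dd r r') pi) (@expiD R (th_uu r r')) (@expiD R (phi r)) expipi expiV.
  split => //.
    by rewrite [X in _ = X * _ * _]Eu; field; rewrite tz nu.
  by rewrite [X in _ = _ * X * _]Ed; field; rewrite tz nd.
split.
  move=> H r r' a; have [k1 k2 k3] := key r r' a; have [h1 _] := H r r' a.
  by apply/expi_eqP; rewrite -k2 -h1 k1.
move=> H r r' a; have [k1 k2 k3] := key r r' a.
have e : expi (phi r - phi r') = expi (th_uu r r' + th_dd r r' + pi).
  by apply/esym/expi_eqP; apply: H.
by rewrite k1 k2 k3 e.
Qed.

End Parts.
Section Fock.
Variables (R : realType) (V : finType).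
Local Notation op := (op R V).
Local Notation md := (mode V).
Local Notation cd := (cdag R).
Local Notation cn := (cann R).
Local Notation jw := (jw_sign R).

Lemma op_ext (A B : op) :
  (forall S T : {set md}, A (enum_rank S) (enum_rank T) = B (enum_rank S) (enum_rank T)) -> A = B.
Proof. move=> H; apply/matrixP => i j; by rewrite -(enum_valK i) -(enum_valK j) H. Qed.

Lemma mk_opE f (S T : {set md}) : mk_op f (enum_rank S) (enum_rank T) = f S T :> R[i].
Proof. by rewrite mxE !enum_rankK. Qed.

Lemma mulE (A B : op) (S T : {set md}) : (A * B) (enum_rank S) (enum_rank T) =
  \sum_(K : {set md}) A (enum_rank S) (enum_rank K) * B (enum_rank K) (enum_rank T).
Proof.
rewrite -mulmxE mxE (reindex enum_rank) //=.
by apply: onW_bij; apply: enum_rank_bij.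
Qed.

Lemma addE (A B : op) i j : (A + B) i j = A i j + B i j. Proof. by rewrite mxE. Qed.
Lemma oppE (A : op) i j : (- A) i j = - A i j. Proof. by rewrite mxE. Qed.
Lemma zeroE i j : (0 : op) i j = 0. Proof. by rewrite mxE. Qed.
Lemma scaleE k (A : op) i j : (k *: A) i j = k * A i j. Proof. by rewrite mxE. Qed.
Lemma oneE (S T : {set md}) : (1 : op) (enum_rank S) (enum_rank T) = (S == T)%:R.
Proof. by rewrite /= mxE (inj_eq enum_rank_inj). Qed.

Lemma collapse (f : {set md} -> R[i]) (c : bool) X v :
  \sum_K f K * (if c && (K == X) then v else 0) = if c then f X * v else 0.
Proof.
case: c => /=; last by rewrite big1 // => K _; rewrite mulr0.
rewrite (bigD1 X) //= eqxx big1 ?addr0 // => K /negbTE ->; by rewrite mulr0.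
Qed.

Lemma cdE (m : md) (S T : {set md}) : cd m (enum_rank S) (enum_rank T) =
  if (m \notin T) && (S == m |: T) then jw m T else 0.
Proof. exact: mk_opE. Qed.

Lemma cnE (m : md) (S T : {set md}) : cn m (enum_rank S) (enum_rank T) =
  if (m \in T) && (S == T :\ m) then jw m T else 0.
Proof. exact: mk_opE. Qed.

Lemma cdcdE (a b : md) (S T : {set md}) : (cd a * cd b) (enum_rank S) (enum_rank T) =
  if b \notin T then (if (a \notin b |: T) && (S == a |: (b |: T)) then jw a (b |: T) else 0) * jw b T else 0.
Proof. rewrite mulE; under eq_bigr => K _ do rewrite !cdE; exact: collapse. Qed.

Lemma cncdE (a b : md) (S T : {set md}) : (cn a * cd b) (enum_rank S) (enum_rank T) =
  if b \notin T then (if (a \in b |: T) && (S == (b |: T) :\ a) then jw a (b |: T) else 0) * jw b T else 0.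
Proof. rewrite mulE; under eq_bigr => K _ do rewrite cnE cdE; exact: collapse. Qed.

Lemma cdcnE (a b : md) (S T : {set md}) : (cd b * cn a) (enum_rank S) (enum_rank T) =
  if a \in T then (if (b \notin T :\ a) && (S == b |: (T :\ a)) then jw b (T :\ a) else 0) * jw a T else 0.
Proof. rewrite mulE; under eq_bigr => K _ do rewrite cnE cdE; exact: collapse. Qed.

Definition sg (a b : md) : R[i] := if (enum_rank b < enum_rank a)%N then -1 else 1.

Lemma jwU (a b : md) (T : {set md}) : b \notin T -> jw a (b |: T) = sg a b * jw a T.
Proof.
move=> bT; rewrite /jw_sign /sg.
set A := [set m' in T | _].
have -> : [set m' in b |: T | (enum_rank m' < enum_rank a)%N] =
   if (enum_rank b < enum_rank a)%N then b |: A else A.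
  apply/setP => x; rewrite !inE; case: ifP => h; rewrite ?inE; case: (eqVneq x b) => [->|] //=.
  by rewrite h andbF.
case: ifP => _; last by rewrite mul1r.
rewrite cardsU1 inE (negbTE bT) /= exprD expr1 //.
Qed.

Lemma sg2 (a b : md) : sg a b * sg a b = 1.
Proof. by rewrite /sg; case: ifP; rewrite ?mulrNN mulr1. Qed.

Lemma sgsum (a b : md) : a != b -> sg a b + sg b a = 0.
Proof.
move=> ab; rewrite /sg.
have : enum_rank a != enum_rank b by rewrite (inj_eq enum_rank_inj).
case: ltngtP => h; rewrite ?addNr ?addrN //.
by move=> /negP []; apply/eqP/val_inj.
Qed.

Lemma jw2 (a : md) (T : {set md}) : jw a T * jw a T = 1.
Proof. by rewrite /jw_sign -expr2 -exprM mulnC exprM sqrrN expr1n expr1n. Qed.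


Lemma jwD (a b : md) (T : {set md}) : b \in T -> jw a (T :\ b) = sg a b * jw a T.
Proof.
move=> bT; have := @jwU a b (T :\ b); rewrite setD11 setD1K // => /(_ isT) ->.
by rewrite mulrA sg2 mul1r.
Qed.

Lemma sgaa (a : md) : sg a a = 1.
Proof. by rewrite /sg ltnn. Qed.

Lemma sign_sum (a b : md) (T : {set md}) : a != b ->
  sg a b * jw a T * jw b T + sg b a * jw b T * jw a T = 0.
Proof. by move=> ab; rewrite [sg b a * _ * _]mulrAC -!mulrDl sgsum // !mul0r. Qed.

Lemma cd_anti (a b : md) : cd a * cd b + cd b * cd a = 0.
Proof.
apply: op_ext => S T; rewrite addE zeroE !cdcdE.
case: (eqVneq a b) => [<-|ab].
  by rewrite setU11 /= !mul0r !if_same addr0.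
have ab1 : (a == b) = false by apply/negbTE. have ab2 : (b == a) = false by rewrite eq_sym; apply/negbTE.
rewrite !in_setU1 ab1 ab2 /=.
case: (boolP (b \in T)) => bT; case: (boolP (a \in T)) => aT //=;
  rewrite ?mul0r ?if_same ?addr0 //.
rewrite setUCA; case: eqP => _; last by rewrite !mul0r addr0.
by rewrite (jwU _ _ _ bT) (jwU _ _ _ aT) sign_sum.
Qed.

Lemma cd_sq (a : md) : cd a * cd a = 0.
Proof.
apply: op_ext => S T; rewrite zeroE cdcdE setU11 /=.
by rewrite mul0r if_same.
Qed.

Lemma car (a b : md) : cn a * cd b + cd b * cn a = (a == b)%:R *: (1 : op).
Proof.
apply: op_ext => S T; rewrite addE scaleE oneE cncdE cdcnE.
case: (eqVneq a b) => [<-|ab].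
  case: (boolP (a \in T)) => aT /=.
    rewrite setD11 setD1K //= (jwD _ _ _ aT) sgaa mul1r add0r mul1r.
    by case: eqP => _; rewrite ?jw2 ?mul0r.
  rewrite setU11 setU1K //= (jwU _ _ _ aT) sgaa mul1r addr0 mul1r.
  by case: eqP => _; rewrite ?jw2 ?mul0r.
have ab1 : (a == b) = false by apply/negbTE. have ab2 : (b == a) = false by rewrite eq_sym; apply/negbTE.
rewrite ?ab1 mul0r in_setU1 in_setD1 ?ab1 ?ab2 /=.
case: (boolP (b \in T)) => bT; case: (boolP (a \in T)) => aT //=;
  rewrite ?mul0r ?if_same ?addr0 ?add0r //.
have eS : (b |: T) :\ a = b |: (T :\ a).
  apply/setP => x; rewrite !inE; case: (eqVneq x b) => // ->.
  by rewrite eq_sym ab.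
rewrite eS; case: eqP => _; last by rewrite !mul0r addr0.
by rewrite (jwU _ _ _ bT) (jwD _ _ _ aT) sign_sum.
Qed.

Lemma cd_anti' (a b : md) : cd a * cd b = - (cd b * cd a).
Proof. by apply/eqP; rewrite -addr_eq0 cd_anti. Qed.

Lemma car' (a b : md) : cn a * cd b = (a == b)%:R *: (1 : op) - cd b * cn a.
Proof. by rewrite -car addrK. Qed.


Lemma mulZr k (A B : op) : A * (k *: B) = k *: (A * B).
Proof. by rewrite -!mulmxE -scalemxAr. Qed.
Lemma mulZl k (A B : op) : (k *: A) * B = k *: (A * B).
Proof. by rewrite -!mulmxE -scalemxAl. Qed.

Lemma comm_hop (a b x y : md) :
  commutator (cd a *m cn b) (cd x *m cd y) =
  (b == x)%:R *: (cd a * cd y) - (b == y)%:R *: (cd a * cd x).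
Proof.
rewrite /commutator !mulmxE.
have e1 : cd a * cn b * (cd x * cd y) =
   (b == x)%:R *: (cd a * cd y) - cd a * cd x * (cn b * cd y).
  rewrite mulrA -(mulrA (cd a)) car' mulrBr mulrBl mulZr mulr1 mulZl.
  by rewrite !mulrA.
have e2 : cd a * cd x * (cn b * cd y) =
   (b == y)%:R *: (cd a * cd x) - cd a * cd x * cd y * cn b.
  by rewrite car' mulrBr mulZr mulr1 !mulrA.
have e3 : cd x * cd y * (cd a * cn b) = cd a * cd x * cd y * cn b.
  rewrite mulrA -(mulrA (cd x) (cd y) (cd a)) (cd_anti' y a) mulrN mulrA (cd_anti' x a) !mulNr opprK.
  done.
by rewrite e1 e2 e3 opprB addrA addrAC addrK.
Qed.


Lemma commE (A B : op) : commutator A B = A * B - B * A.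
Proof. by rewrite /commutator !mulmxE. Qed.

Lemma commDl (A B C : op) : commutator (A + B) C = commutator A C + commutator B C.
Proof. by rewrite !commE mulrDl mulrDr opprD addrACA. Qed.

Lemma commNl (A C : op) : commutator (- A) C = - commutator A C.
Proof. by rewrite !commE mulNr mulrN opprB opprK addrC. Qed.

Lemma commZl k (A C : op) : commutator (k *: A) C = k *: commutator A C.
Proof. by rewrite !commE mulZl mulZr scalerBr. Qed.

Lemma commZr k (A C : op) : commutator A (k *: C) = k *: commutator A C.
Proof. by rewrite !commE mulZl mulZr scalerBr. Qed.

Lemma commMl (A B C : op) : commutator (A *m B) C = A * commutator B C + commutator A C * B.
Proof.
rewrite !commE mulmxE mulrBr mulrBl !mulrA addrA subrK.
by [].
Qed.

Lemma comm_suml (I : Type) (r : seq I) (P : pred I) (F : I -> op) C :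
  commutator (\sum_(i <- r | P i) F i) C = \sum_(i <- r | P i) commutator (F i) C.
Proof.
apply: (big_morph (fun A => commutator A C)) => [A B|]; first exact: commDl.
by rewrite commE mul0r mulr0 subrr.
Qed.

Lemma comm_sumr (I : Type) (r : seq I) (P : pred I) (F : I -> op) C :
  commutator C (\sum_(i <- r | P i) F i) = \sum_(i <- r | P i) commutator C (F i).
Proof.
apply: (big_morph (fun A => commutator C A)) => [A B|].
  by rewrite !commE mulrDl mulrDr opprD addrACA.
by rewrite commE mul0r mulr0 subrr.
Qed.

Lemma big_spin (F : spin -> op) : \sum_(s : spin) F s = F Up + F Dn.
Proof.
rewrite (bigD1 Up) //= (bigD1 Dn) //= big1 ?addr0 //.
by case.
Qed.

Lemma num_eta (q : V -> R[i]) (r : V) (s : spin) :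
  commutator (numop R (r, s)) (eta_dag q) = q r *: (cd (r, Up) * cd (r, Dn)).
Proof.
rewrite /eta_dag comm_sumr (bigD1 r) //= big1 ?addr0.
  rewrite commZr /numop comm_hop !xpair_eqE eqxx /=.
  case: s => /=; rewrite ?scale1r ?scale0r ?subr0 ?sub0r //.
  by rewrite cd_anti' opprK.
move=> r' ne; rewrite commZr /numop comm_hop !xpair_eqE eq_sym (negbTE ne) /=.
by rewrite !scale0r subrr scaler0.
Qed.

Lemma hop_eta (q : V -> R[i]) (a : md) (r' : V) (s' : spin) :
  commutator (cd a *m cn (r', s')) (eta_dag q) =
  (q r' * sgn_spin s') *: (cd a * cd (r', flip s')).
Proof.
rewrite /eta_dag comm_sumr (bigD1 r') //= big1 ?addr0.
  rewrite commZr comm_hop !xpair_eqE eqxx /=.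
  case: s' => /=; rewrite ?scale1r ?scale0r ?subr0 ?sub0r ?mulr1 //.
  by rewrite mulrN1 scaleNr scalerN.
move=> r'' ne; rewrite commZr comm_hop !xpair_eqE eq_sym (negbTE ne) /=.
by rewrite !scale0r subrr scaler0.
Qed.

Lemma UU_eta (q : V -> R[i]) (r : V) :
  commutator (numop R (r, Up) *m numop R (r, Dn)) (eta_dag q) =
  q r *: (cd (r, Up) * cd (r, Dn)).
Proof.
rewrite commMl !num_eta mulZr mulZl -scalerDr; congr (_ *: _).
rewrite /numop !mulmxE.
have -> : cd (r, Up) * cn (r, Up) * (cd (r, Up) * cd (r, Dn)) = cd (r, Up) * cd (r, Dn).
  rewrite mulrA -(mulrA (cd (r, Up))) car' eqxx scale1r mulrBr mulr1 mulrBl.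
  by rewrite mulrA cd_sq !mul0r subr0.
have -> : cd (r, Up) * cd (r, Dn) * (cd (r, Dn) * cn (r, Dn)) = 0.
  by rewrite mulrA -(mulrA (cd (r, Up))) cd_sq mulr0 mul0r.
by rewrite addr0.
Qed.


Lemma flipK : involutive flip. Proof. by case. Qed.
Lemma flip_inj : injective flip. Proof. exact: inv_inj flipK. Qed.
Lemma sgn_flip s : sgn_spin (flip s) = - sgn_spin s :> R[i].
Proof. by case: s => /=; rewrite ?opprK. Qed.

Definition Gop (t : V -> V -> spin -> spin -> R[i]) (q : V -> R[i]) (r r' : V) : op :=
  \sum_(s : spin) \sum_(s' : spin)
     (t r r' s s' * (q r' * sgn_spin s')) *: (cd (r, s) * cd (r', flip s')).

Lemma Gop_anti (adj : rel V) t q r r' : edge_condition adj t q -> adj r r' ->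
  Gop t q r r' + Gop t q r' r = 0.
Proof.
move=> E a; rewrite /Gop.
have -> : \sum_(s : spin) \sum_(s' : spin)
     (t r' r s s' * (q r * sgn_spin s')) *: (cd (r', s) * cd (r, flip s')) =
   \sum_(s : spin) \sum_(s' : spin)
     (- (t r' r (flip s') (flip s) * (q r * sgn_spin (flip s)))) *: (cd (r, s) * cd (r', flip s')).
  rewrite exchange_big /= (reindex_inj flip_inj) /=; apply: eq_bigr => x _.
  rewrite (reindex_inj flip_inj) /=; apply: eq_bigr => y _.
  by rewrite flipK cd_anti' scalerN scaleNr.
rewrite -big_split /=; apply: big1 => x _; rewrite -big_split /=; apply: big1 => y _.
rewrite -scalerDl; apply/eqP; rewrite scaler_eq0; apply/orP; left; apply/eqP.
have e := E r r' a (flip x) (flip y); rewrite !flipK (sgn_flip y) in e.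
transitivity (- (q r * t r' r (flip y) (flip x) * sgn_spin (flip x) +
    q r' * t r r' x y * - sgn_spin y)); first by ring.
by rewrite e oppr0.
Qed.

Lemma hop_zero (adj : rel V) t q : simple_graph adj -> edge_condition adj t q ->
  \sum_(r : V) \sum_(r' : V | adj r r') Gop t q r r' = 0.
Proof.
move=> [Hs _] E.
set S := (X in X = 0).
have mk : forall H : V -> V -> op, \sum_(r : V) \sum_(r' : V | adj r r') H r r' =
    \sum_(r : V) \sum_(r' : V) (if adj r r' then H r r' else 0).
  by move=> H; apply: eq_bigr => r _; rewrite big_mkcond.
have S2 : S = \sum_(r : V) \sum_(r' : V | adj r r') Gop t q r' r.
  rewrite /S !mk exchange_big /=; apply: eq_bigr => x _; apply: eq_bigr => y _.
  by rewrite Hs.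
have SS : S + S = 0.
  rewrite {2}S2 /S -big_split /=; apply: big1 => r _; rewrite -big_split /=.
  by apply: big1 => r' a; exact: (@Gop_anti adj t q r r' E a).
have h2 : (2 : R[i]) != 0 by rewrite pnatr_eq0.
have -> : S = (2^-1 * 2) *: S by rewrite mulVf // scale1r.
by rewrite -scalerA scaler_nat -[S *+ 2]/(S + S) SS scaler0.
Qed.


Lemma part4 (adj : rel V) t (mu : V -> spin -> R) (U : V -> R) q (Ecal : R) :
  simple_graph adj -> edge_condition adj t q ->
  (forall r, U r - mu r Up - mu r Dn = Ecal) ->
  commutator (H_gen adj t mu U) (eta_dag q) = Ecal%:C *: eta_dag q.
Proof.
move=> Hsg E HU; rewrite /H_gen !commDl !commNl.
have hA : commutator (\sum_(r : V) \sum_(r' : V | adj r r') \sum_(s : spin) \sum_(s' : spin)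
        t r r' s s' *: (cdag R (r, s) *m cann R (r', s'))) (eta_dag q) = 0.
  transitivity (\sum_(r : V) \sum_(r' : V | adj r r') Gop t q r r'); last exact: (@hop_zero adj t q Hsg E).
  rewrite comm_suml; apply: eq_bigr => r _.
  rewrite comm_suml; apply: eq_bigr => r' _; rewrite /Gop comm_suml.
  apply: eq_bigr => s _; rewrite comm_suml; apply: eq_bigr => s' _.
  by rewrite commZl hop_eta scalerA.
have hB : commutator (\sum_(r : V) \sum_(s : spin) (mu r s)%:C *: numop R (r, s)) (eta_dag q) =
   \sum_(r : V) ((mu r Up)%:C + (mu r Dn)%:C) *: (q r *: (cd (r, Up) * cd (r, Dn))).
  rewrite comm_suml; apply: eq_bigr => r _.
  by rewrite comm_suml big_spin !commZl !num_eta scalerDl.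
have hC : commutator (\sum_(r : V) (U r)%:C *: (numop R (r, Up) *m numop R (r, Dn))) (eta_dag q) =
   \sum_(r : V) (U r)%:C *: (q r *: (cd (r, Up) * cd (r, Dn))).
  rewrite comm_suml; apply: eq_bigr => r _.
  by rewrite commZl UU_eta.
rewrite hA hB hC oppr0 add0r /eta_dag scaler_sumr -sumrN -big_split /=.
apply: eq_bigr => r _; rewrite -scaleNr -scalerDl mulmxE; congr (_ *: _).
rewrite -(HU r) !rmorphB /=.
ring.
Qed.

End Fock.

Theorem mainTheorem5 (R : realType) (V : finType) (adj : rel V)
    (t : V -> V -> spin -> spin -> R[i]) (mu : V -> spin -> R) (U : V -> R) :
  simple_graph adj ->
  hermitian_hopping adj t ->
  (* G connected *)
  (forall x y : V, connect adj x y) ->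
  (* no spin-orbit coupling *)
  (forall r r', adj r r' -> t r r' Up Dn = 0 /\ t r r' Dn Up = 0) ->
  (* nonvanishing spin-conserving hoppings *)
  (forall r r', adj r r' -> t r r' Up Up != 0 /\ t r r' Dn Dn != 0) ->
  [/\
   (* (1) edge condition <-> ratio condition, for nonzero q *)
   forall q : V -> R[i], (forall r, q r != 0) ->
     (edge_condition adj t q <->
      (forall r r', adj r r' ->
         q r / q r' = - t r r' Dn Dn / (t r r' Up Up)^* /\
         q r / q r' = - t r r' Up Up / (t r r' Dn Dn)^*)),
   (* (2) consequences: equal moduli of hoppings, constant |q| *)
   forall q : V -> R[i], (forall r, q r != 0) -> edge_condition adj t q ->
     (forall r r', adj r r' -> `|t r r' Up Up| = `|t r r' Dn Dn|) /\
     (forall r r', `|q r| = `|q r'|),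
   (* (3) phase form of the condition *)
   forall (phi : V -> R) (tt th_uu th_dd : V -> V -> R),
     (forall r r', adj r r' ->
        [/\ 0 < tt r r',
            t r r' Up Up = (tt r r')%:C * expi (th_uu r r') &
            t r r' Dn Dn = (tt r r')%:C * expi (th_dd r r')]) ->
     (edge_condition adj t (fun r => expi (phi r)) <->
      (forall r r', adj r r' ->
         exists k : int,
           th_uu r r' + th_dd r r' + pi = phi r - phi r' + k%:~R * (2 * pi)))
   &
   (* (4) eta-pairing *)
   forall (phi : V -> R) (Ecal : R),
     edge_condition adj t (fun r => expi (phi r)) ->
     (forall r, U r - mu r Up - mu r Dn = Ecal) ->
     commutator (H_gen adj t mu U) (eta_dag (fun r => expi (phi r)))
       = Ecal%:C *: eta_dag (fun r => expi (phi r))].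
Proof.
move=> Hsg Hh Hc Hsoc Hnz; split.
- by move=> q qnz; apply: part1.
- by move=> q qnz E; apply: part2.
- move=> phi tt th_uu th_dd Ht; exact: (@part3 R V adj t Hsg Hh Hsoc Hnz phi tt th_uu th_dd Ht).
- by move=> phi Ecal E HU; apply: part4.
Qed.
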